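(* Let $\alpha\in\{\frac13,\frac12\}$. For any two BISO channels $W_1:X\mapsto Y_1$ and $W_2:X\mapsto Y_2$ with the same $\alpha$-capacity, $W_1$ is $\alpha$-more capable than $W_2$ and $W_2$ is $\alpha$-more capable than $W_1$.
   Context: A binary input symmetric output (BISO) channel has input alphabet $\{0,1\}$ and a finite output alphabet $\{0,\pm1,\dots,\pm l\}$ with $P_{Y|X}(y|0)=P_{Y|X}(-y|1)$ for all $y$. Sibson's Rényi mutual information of an input distribution $P_X$ on $\{0,1\}$ and channel $P_{Y|X}$ is $I^S_\alpha(X:Y)=\frac{\alpha}{\alpha-1}\log\sum_y\big(\sum_x P_X(x)P_{Y|X}(y|x)^\alpha\big)^{1/\alpha}$; the $\alpha$-capacity is $C_\alpha(P_{Y|X})=\sup_{P_X}I^S_\alpha(X:Y)$. A channel $W_1:X\mapsto Y_1$ is $\alpha$-more capable than $W_2:X\mapsto Y_2$ if $I^S_\alpha(X:Y_1)\ge I^S_\alpha(X:Y_2)$ for every input distribution $P_X$. *)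

(* Defs.v *)
From HB Require Import structures.
From mathcomp Require Import all_boot all_order all_algebra.
From mathcomp Require Import all_classical all_reals all_analysis.

Set Implicit Arguments.
Unset Strict Implicit.
Unset Printing Implicit Defensive.

Import Order.TTheory GRing.Theory Num.Theory.
Local Open Scope classical_set_scope.
Local Open Scope ring_scope.

(* Output alphabet {0, +-1, ..., +-l} encoded as 'I_(2l+1): index i stands for
   the symbol i - l.  Negation y |-> -y is i |-> 2l - i. *)
Definition out_neg (l : nat) (i : 'I_(l.*2.+1)) : 'I_(l.*2.+1) := rev_ord i.

(* Input alphabet {0,1} encoded as bool (false = 0, true = 1).
   A channel is a transition matrix W x y = P_{Y|X}(y|x). *)
Definition is_channel (R : realType) (l : nat)
    (W : bool -> 'I_(l.*2.+1) -> R) : Prop :=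
  (forall x y, 0 <= W x y) /\ (forall x, \sum_(y < l.*2.+1) W x y = 1).

Definition BISO (R : realType) (l : nat) (W : bool -> 'I_(l.*2.+1) -> R) : Prop :=
  is_channel W /\ (forall y, W false y = W true (out_neg y)).

Definition is_input_dist (R : realType) (P : bool -> R) : Prop :=
  (forall x, 0 <= P x) /\ P false + P true = 1.

Definition sibsonI (R : realType) (alpha : R) (l : nat) (P : bool -> R)
    (W : bool -> 'I_(l.*2.+1) -> R) : R :=
  alpha / (alpha - 1) *
    ln (\sum_(y < l.*2.+1)
          (\sum_(x : bool) P x * powR (W x y) alpha) `^ (alpha^-1)).

Definition alpha_capacity (R : realType) (alpha : R) (l : nat)
    (W : bool -> 'I_(l.*2.+1) -> R) : R :=
  sup [set v : R | exists P : bool -> R, is_input_dist P /\ v = sibsonI alpha P W].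

Definition more_capable (R : realType) (alpha : R) (l1 l2 : nat)
    (W1 : bool -> 'I_(l1.*2.+1) -> R) (W2 : bool -> 'I_(l2.*2.+1) -> R) : Prop :=
  forall P : bool -> R, is_input_dist P -> sibsonI alpha P W2 <= sibsonI alpha P W1.

(* Main.v *)
Require Import Defs.
From HB Require Import structures.
From mathcomp Require Import all_boot all_order all_algebra.
From mathcomp Require Import all_classical all_reals all_analysis.
From mathcomp Require Import ring lra.
Set Implicit Arguments.
Unset Strict Implicit.
Unset Printing Implicit Defensive.
Import Order.TTheory GRing.Theory Num.Theory.
Local Open Scope classical_set_scope.
Local Open Scope ring_scope.

Section G.
Variable R : realType.

Lemma Tpos (m K p0 p1 : R) : 0 < m <= 3 -> 0 <= K <= 1 -> 0 <= p0 -> 0 <= p1 -> p0 + p1 = 1 ->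
  0 < 1 - m * (p0 * p1) * (1 - K).
Proof.
move=> /andP[m0 m3] /andP[K0 K1] h0 h1 hs.
have e1 : p1 = 1 - p0 by lra.
have hp : p0 * p1 <= 4^-1 by rewrite e1; have := sqr_ge0 (p0 - 2^-1); nra.
have hp0 : 0 <= p0 * p1 by exact: mulr_ge0.
have : m * (p0 * p1) * (1 - K) <= 3 * 4^-1.
  apply: (@le_trans _ _ (m * (p0 * p1))).
    rewrite -[X in _ <= X]mulr1; apply: ler_wpM2l; [apply: mulr_ge0 => //; exact: ltW | lra].
  apply: (@le_trans _ _ (3 * (p0 * p1))); first exact: ler_wpM2r.
  exact: ler_wpM2l.
lra.
Qed.

Lemma cap_eq (alpha c m K : R) l (W : bool -> 'I_(l.*2.+1) -> R) :
  c < 0 -> 0 < m <= 3 -> 0 <= K <= 1 ->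
  (forall P, is_input_dist P -> sibsonI alpha P W = c * ln (1 - m * (P false * P true) * (1 - K))) ->
  alpha_capacity alpha W = c * ln (1 - m * (2^-1 * 2^-1) * (1 - K)).
Proof.
move=> c0 hm hK hW.
have hpos : forall p0 p1 : R, 0 <= p0 -> 0 <= p1 -> p0 + p1 = 1 -> 0 < 1 - m * (p0 * p1) * (1 - K).
  by move=> *; apply: Tpos.
have hh : 0 < 1 - m * (2^-1 * 2^-1) * (1 - K :R) by apply: hpos; lra.
have ub : ubound [set v : R | exists P : bool -> R, is_input_dist P /\ v = sibsonI alpha P W]
      (c * ln (1 - m * (2^-1 * 2^-1) * (1 - K))).
  move=> v [P [[P0 Ps] ->]]; rewrite (hW P (conj P0 Ps)).
  rewrite (ler_nM2l c0).
  rewrite ler_ln ?posrE //; last by apply: hpos.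
  have hp : P false * P true <= 2^-1 * 2^-1.
    have e1 : P true = 1 - P false by lra.
    rewrite e1; have := sqr_ge0 (P false - 2^-1); nra.
  case/andP: hm => m0 _; case/andP: hK => _ K1.
  rewrite lerD2l lerN2; apply: ler_wpM2r; first lra.
  by apply: ler_wpM2l => //; exact: ltW.
pose P : bool -> R := fun _ => 2^-1.
have dP : is_input_dist P by split; rewrite /P //= => *; lra.
have inE : [set v : R | exists P : bool -> R, is_input_dist P /\ v = sibsonI alpha P W]
    (c * ln (1 - m * (2^-1 * 2^-1) * (1 - K))).
  by exists P; split => //; rewrite hW.
apply/eqP; rewrite eq_le; apply/andP; split.
  by apply: ge_sup => //; exists (c * ln (1 - m * (2^-1 * 2^-1) * (1 - K))).
by apply: ub_le_sup => //; exists (c * ln (1 - m * (2^-1 * 2^-1) * (1 - K))).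
Qed.

Lemma powR_inv_n (w : R) n : 0 <= w -> (n > 0)%N -> (w `^ (n%:R^-1)) ^+ n = w.
Proof.
move=> w0 n0; rewrite -powR_mulrn ?powR_ge0 // -powRrM mulVf ?powRr1 //.
by rewrite pnatr_eq0 -lt0n.
Qed.

Lemma symW l (W : bool -> 'I_(l.*2.+1) -> R) : BISO W ->
  forall y, W true y = W false (out_neg y).
Proof. by move=> [_ hs] y; rewrite hs /out_neg rev_ordK. Qed.

Lemma case_half l (W : bool -> 'I_(l.*2.+1) -> R) : BISO W ->
  exists K : R, 0 <= K <= 1 /\ forall P, is_input_dist P ->
   sibsonI (2^-1) P W = -1 * ln (1 - 2 * (P false * P true) * (1 - K)).
Proof.
move=> hB; have [[Wge0 Wsum] _] := hB.
pose a y := W false y `^ (2%:R^-1); pose b y := W true y `^ (2%:R^-1).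
have a2 y : a y ^+ 2 = W false y by rewrite powR_inv_n.
have b2 y : b y ^+ 2 = W true y by rewrite powR_inv_n.
have a0 y : 0 <= a y by exact: powR_ge0.
have b0 y : 0 <= b y by exact: powR_ge0.
exists (\sum_y a y * b y); split.
  apply/andP; split; first by apply: sumr_ge0 => y _; exact: mulr_ge0.
  apply: (@le_trans _ _ (\sum_y (2^-1 * (W false y + W true y)))).
    apply: ler_sum => y _; rewrite -a2 -b2.
    have := sqr_ge0 (a y - b y); nra.
  by rewrite -mulr_sumr big_split /= !Wsum; lra.
move=> P [P0 Ps].
rewrite /sibsonI.
have -> : (2^-1 : R) / (2^-1 - 1) = -1 by field.
congr (_ * ln _).
rewrite invrK.
transitivity (\sum_y (P false ^+ 2 * W false y + P true ^+ 2 * W true y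
                      + 2 * (P false * P true) * (a y * b y))).
  apply: eq_bigr => y _.
  rewrite big_bool /= (@powR_mulrn _ _ 2); last first.
    by apply: addr_ge0; apply: mulr_ge0 => //; apply: powR_ge0.
  rewrite -/(a y) -/(b y). rewrite -a2 -b2. ring.
rewrite big_split big_split /= -!mulr_sumr !Wsum.
have e : P true = 1 - P false by lra.
rewrite e; ring.
Qed.

Lemma case_third l (W : bool -> 'I_(l.*2.+1) -> R) : BISO W ->
  exists K : R, 0 <= K <= 1 /\ forall P, is_input_dist P ->
   sibsonI (3^-1) P W = - 2^-1 * ln (1 - 3 * (P false * P true) * (1 - K)).
Proof.
move=> hB; have [[Wge0 Wsum] _] := hB.
pose a y := W false y `^ (3%:R^-1); pose b y := W true y `^ (3%:R^-1).
have a3 y : a y ^+ 3 = W false y by rewrite powR_inv_n.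
have b3 y : b y ^+ 3 = W true y by rewrite powR_inv_n.
have a0 y : 0 <= a y by exact: powR_ge0.
have b0 y : 0 <= b y by exact: powR_ge0.
have sym : \sum_y a y * (b y) ^+ 2 = \sum_y (a y) ^+ 2 * b y.
  rewrite (reindex_inj rev_ord_inj) /=; apply: eq_bigr => y _.
  have e1 : W false (rev_ord y) = W true y by rewrite hB.2 /out_neg rev_ordK.
  have e2 : W true (rev_ord y) = W false y by rewrite (symW hB) /out_neg rev_ordK.
  by rewrite /a /b e1 e2 mulrC.
exists (\sum_y (a y) ^+ 2 * b y); split.
  apply/andP; split; first by apply: sumr_ge0 => y _; apply: mulr_ge0 => //; exact: exprn_ge0.
  apply: (@le_trans _ _ (\sum_y (3^-1 * (2 * W false y + W true y)))).
    apply: ler_sum => y _; rewrite -a3 -b3.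
    have := a0 y; have := b0 y; have := sqr_ge0 (a y - b y).
    move=> h1 h2 h3; have h4 : 0 <= (a y - b y) ^+ 2 * (2 * a y + b y).
      by apply: mulr_ge0 => //; lra.
    nra.
  by rewrite -mulr_sumr big_split /= -mulr_sumr !Wsum; lra.
move=> P [P0 Ps].
rewrite /sibsonI.
have -> : (3^-1 : R) / (3^-1 - 1) = - 2^-1 by field.
congr (_ * ln _).
rewrite invrK.
transitivity (\sum_y (P false ^+ 3 * W false y + P true ^+ 3 * W true y
                      + 3 * (P false ^+ 2 * P true) * ((a y) ^+ 2 * b y)
                      + 3 * (P false * P true ^+ 2) * (a y * (b y) ^+ 2))).
  apply: eq_bigr => y _.
  rewrite big_bool /= (@powR_mulrn _ _ 3); last first.
    by apply: addr_ge0; apply: mulr_ge0 => //; apply: powR_ge0.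
  rewrite -/(a y) -/(b y). rewrite -a3 -b3. ring.
rewrite !big_split /= -!mulr_sumr !Wsum sym.
have e : P true = 1 - P false by lra.
rewrite e; ring.
Qed.

Lemma final (alpha c m : R) l1 l2 (W1 : bool -> 'I_(l1.*2.+1) -> R) (W2 : bool -> 'I_(l2.*2.+1) -> R) (K1 K2 : R) :
  c < 0 -> 0 < m <= 3 -> 0 <= K1 <= 1 -> 0 <= K2 <= 1 ->
  (forall P, is_input_dist P -> sibsonI alpha P W1 = c * ln (1 - m * (P false * P true) * (1 - K1))) ->
  (forall P, is_input_dist P -> sibsonI alpha P W2 = c * ln (1 - m * (P false * P true) * (1 - K2))) ->
  alpha_capacity alpha W1 = alpha_capacity alpha W2 ->
  more_capable alpha W1 W2 /\ more_capable alpha W2 W1.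
Proof.
move=> c0 hm hK1 hK2 h1 h2.
rewrite (cap_eq c0 hm hK1 h1) (cap_eq c0 hm hK2 h2).
move/(mulfI (ltr0_neq0 c0)) => /ln_inj.
have p1 : 0 < 1 - m * (2^-1 * 2^-1) * (1 - K1 : R) by apply: Tpos => //; lra.
have p2 : 0 < 1 - m * (2^-1 * 2^-1) * (1 - K2 : R) by apply: Tpos => //; lra.
move=> /(_ p1 p2) e.
have eK : K1 = K2.
  have hm0 : m * (2^-1 * 2^-1) != 0.
    case/andP: hm => m0 _; apply: lt0r_neq0; apply: mulr_gt0 => //; exact: mulr_gt0.
  apply: (mulfI hm0); apply: oppr_inj; apply: (addrI 1); move: e.
  rewrite !mulrBr !mulr1 => e; lra.
subst K2; split => P hP; by rewrite h1 // h2.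
Qed.
End G.

Theorem corollary1 (R : realType) (alpha : R)
    (halpha : alpha = 3^-1 \/ alpha = 2^-1)
    (l1 l2 : nat)
    (W1 : bool -> 'I_(l1.*2.+1) -> R) (W2 : bool -> 'I_(l2.*2.+1) -> R) :
  BISO W1 -> BISO W2 ->
  alpha_capacity alpha W1 = alpha_capacity alpha W2 ->
  more_capable alpha W1 W2 /\ more_capable alpha W2 W1.
Proof.
move=> hB1 hB2; case: halpha => ->.
  have [K1 [hK1 h1]] := case_third hB1.
  have [K2 [hK2 h2]] := case_third hB2.
  apply: (final _ _ hK1 hK2 h1 h2); lra.
have [K1 [hK1 h1]] := case_half hB1.
have [K2 [hK2 h2]] := case_half hB2.
apply: (final _ _ hK1 hK2 h1 h2); lra.
Qed.
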